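(* Let $\mathcal{F}\subseteq[\omega]^{<\omega}$ be a compact hereditary family covering $\omega$ which is large. Then the unit vector sequence $(e_n)$ is weakly null in $X^{\mathcal{F}}$ (i.e. $f(e_n)\to0$ for every continuous linear functional $f$ on $X^\mathcal{F}$) but $\lVert e_n\rVert^{\mathcal{F}}=1$ for all $n$. Hence $X^{\mathcal{F}}$ does not have the Schur property. In particular $X^{\mathcal{S}}$ does not have the Schur property.
   Context: $\omega=\{1,2,3,\dots\}$; $[\omega]^{<\omega}$ and $[M]^n$ denote the finite subsets of $\omega$ and the $n$-element subsets of $M$. Subsets of $\omega$ are identified with elements of $2^\omega$; compact means compact in $2^\omega$; hereditary means closed under subsets. A family $\mathcal{F}$ is large if $\mathcal{F}\cap[M]^n\neq\emptyset$ for every infinite $M\subseteq\omega$ and every $n\in\omega$. A partition is a family $\mathcal{P}\subseteq\mathcal{P}(\omega)$ with $\emptyset\in\mathcal{P}$, $\bigcup\mathcal{P}=\omega$, elements pairwise disjoint; $\mathbb{P}_\mathcal{F}$ is the set of partitions contained in $\mathcal{F}$. $\lVert x\rVert^{\mathcal{F}}=\inf_{\mathcal{P}\in\mathbb{P}_\mathcal{F}}\sum_{F\in\mathcal{P}}\sup_{k\in F}|x(k)|$; $X^\mathcal{F}$ is the completion of $c_{00}$ under this quasi-norm. A (quasi-)Banach space has the Schur property if every weakly null sequence converges to $0$ in (quasi-)norm. $\mathcal{S}=\{A\subseteq\omega:|A|\le\min A\}$ is the Schreier family. *)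

(* Defs.v *)
From HB Require Import structures.
From mathcomp Require Import all_boot all_order all_algebra.
From mathcomp Require Import all_classical all_reals all_analysis.
Set Implicit Arguments. Unset Strict Implicit. Unset Printing Implicit Defensive.
Import Order.TTheory GRing.Theory Num.Theory.
Import numFieldNormedType.Exports.
Local Open Scope classical_set_scope.
Local Open Scope ring_scope.
Local Open Scope card_scope.

(* omega = {1,2,3,...} is represented inside nat; a subset of omega is an
   element of 2^nat = cantor_space (i.e. nat -> bool) whose bit 0 is false. *)
Definition subset_omega (A : cantor_space) : Prop := ~~ A 0%N.

Definition finite_family (F : set cantor_space) : Prop :=
  forall A, F A -> subset_omega A /\ finite_set [set k | A k].

Definition compact_family (F : set cantor_space) : Prop := compact F.

Definition hereditary (F : set cantor_space) : Prop :=
  forall A B : cantor_space, F A -> (forall k, B k -> A k) -> F B.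

Definition covers_omega (F : set cantor_space) : Prop :=
  (forall k, (0 < k)%N -> exists2 A, F A & A k) /\
  (forall A, F A -> subset_omega A).

Definition large (F : set cantor_space) : Prop :=
  forall M : set nat, ~ M 0%N -> infinite_set M ->
  forall n : nat, (0 < n)%N ->
  exists2 A, F A & [set k | A k] `<=` M /\ [set k | A k] #= `I_n.

Definition empty_set_pt : cantor_space := fun _ => false.

Definition is_partition (P : set cantor_space) : Prop :=
  [/\ P empty_set_pt,
      (forall A, P A -> subset_omega A),
      (forall k, (0 < k)%N -> exists2 A, P A & A k) &
      (forall A B, P A -> P B -> A <> B -> forall k, ~~ (A k && B k))].

Definition partitions_in (F : set cantor_space) : set (set cantor_space) :=
  [set P | is_partition P /\ P `<=` F].

(* sup_{k in A} |x k|, with the convention sup over the empty set = 0 *)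
Definition supabs (R : realType) (x : nat -> R) (A : cantor_space) : \bar R :=
  ereal_sup ([set (`|x k|)%:E | k in [set k | A k]] `|` [set 0%E]).

Definition qnorm (R : realType) (F : set cantor_space) (x : nat -> R) : \bar R :=
  ereal_inf [set (\esum_(A in P) supabs x A)%E | P in partitions_in F].

Definition c00 (R : realType) (x : nat -> R) : Prop :=
  x 0%N = 0 /\ finite_set [set k | x k != 0].

Definition unitv (R : realType) (n : nat) : nat -> R :=
  fun k => if k == n then 1 else 0.

(* continuous linear functionals on X^F, viewed (by density of c_00 in the
   completion) as linear functionals on c_00 continuous for the quasi-norm *)
Definition cont_lin_functional (R : realType) (F : set cantor_space)
    (f : (nat -> R) -> R) : Prop :=
  (forall (a : R) x y, c00 x -> c00 y -> f (a *: x + y) = a * f x + f y) /\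
  (forall x, c00 x -> forall e : R, 0 < e -> exists2 d : R, 0 < d &
     forall y, c00 y -> (qnorm F (y - x)%R < d%:E)%E -> `|f y - f x| < e).

Definition weakly_null (R : realType) (F : set cantor_space)
    (x : nat -> nat -> R) : Prop :=
  forall f, cont_lin_functional F f -> (fun n => f (x n)) @ \oo --> (0 : R).

Definition norm_null (R : realType) (F : set cantor_space)
    (x : nat -> nat -> R) : Prop :=
  forall e : R, 0 < e -> \forall n \near \oo, (qnorm F (x n) < e%:E)%E.

Definition not_schur (R : realType) (F : set cantor_space) : Prop :=
  exists2 x : nat -> nat -> R, (forall n, c00 (x n)) &
    weakly_null F x /\ ~ norm_null F x.

(* Schreier family S = {A subset of omega : |A| <= min A} *)
Definition schreier : set cantor_space :=
  [set A | A = empty_set_pt \/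
     exists m, [/\ A m, (forall k, A k -> (m <= k)%N) & [set k | A k] #<= `I_m]].

(* Main.v *)
Require Import Defs.
From HB Require Import structures.
From mathcomp Require Import all_boot all_order all_algebra finmap.
From mathcomp Require Import all_classical all_reals all_analysis.
Import Order.TTheory GRing.Theory Num.Theory.
Import numFieldNormedType.Exports.
Local Open Scope classical_set_scope.
Local Open Scope ring_scope.

Section S.
Variable R : realType.

Definition single (k : nat) : cantor_space := fun j => j == k.

Lemma supabs_ge0 (x : nat -> R) (A : cantor_space) : (0 <= supabs x A)%E.
Proof. by apply: ereal_sup_ubound; right. Qed.

Lemma supabs_le (x : nat -> R) (A : cantor_space) (c : R) : 0 <= c ->
  (forall k, A k -> `|x k| <= c) -> (supabs x A <= c%:E)%E.
Proof.
move=> c0 H; apply: ge_ereal_sup => _ [[k Ak <-]|->]; rewrite ?lee_fin //.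
exact: H.
Qed.

Lemma supabs_ge (x : nat -> R) (A : cantor_space) k : A k -> (`|x k|%:E <= supabs x A)%E.
Proof. by move=> Ak; apply: ereal_sup_ubound; left; exists k. Qed.

Lemma esum_single (P : set cantor_space) (g : cantor_space -> \bar R) A0 :
  P A0 -> (forall B, P B -> (0 <= g B)%E) ->
  (forall B, P B -> B <> A0 -> g B = 0%E) ->
  \esum_(B in P) g B = g A0.
Proof.
move=> PA g0 gz; rewrite (esumID [set A0]) //.
rewrite (_ : P `&` [set A0] = [set A0]); last first.
  by apply/seteqP; split=> [B []//|B ->].
rewrite esum_set1 ?g0 // esum1 ?adde0 // => B [PB nB]; exact: gz.
Qed.

Definition partA (A : cantor_space) : set cantor_space :=
  [set B | B = empty_set_pt \/ B = A \/
     exists2 k, (0 < k)%N /\ ~~ A k & B = single k].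

Lemma partA_partition A : subset_omega A -> is_partition (partA A).
Proof.
move=> A0; split.
- by left.
- move=> B [->|[->|[k [k0 _] ->]]] //; rewrite /subset_omega /single.
  by case: k k0.
- move=> k k0; case Ak: (A k).
    by exists A => //; right; left.
  exists (single k); last by rewrite /single eqxx.
  by right; right; exists k => //; rewrite Ak.
- move=> B C PB PC BC k; apply/negP => /andP[Bk Ck].
  move: PB PC BC Bk Ck => [->|[->|[j [j0 Aj] ->]]] [->|[->|[j' [j'0 Aj'] ->]]] //=;
    rewrite /single /=; try by move=> /(_ erefl).
  + by move=> _ Ak /eqP e; subst; rewrite Ak in Aj'.
  + by move=> _ /eqP e Ak; subst; rewrite Ak in Aj.
  + by move=> ne /eqP e /eqP e'; subst; apply: ne.
Qed.


Lemma partA_in (F : set cantor_space) A : F empty_set_pt -> F A ->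
  (forall k, (0 < k)%N -> F (single k)) -> subset_omega A ->
  partitions_in F (partA A).
Proof.
move=> H0 HA H1 A0; split; first exact: partA_partition.
by move=> B [->|[->|[k [k0 _] ->]]] //; apply: H1.
Qed.

Lemma qnorm_supp (F : set cantor_space) A (x : nat -> R) (c : R) :
  F empty_set_pt -> F A -> (forall k, (0 < k)%N -> F (single k)) ->
  subset_omega A -> 0 <= c ->
  (forall k, ~~ A k -> x k = 0) -> (forall k, `|x k| <= c) ->
  (qnorm F x <= c%:E)%E.
Proof.
move=> H0 HA H1 A0 c0 xA xc.
apply: le_trans (ereal_inf_lbound _) _.
  by exists (partA A) => //; exact: partA_in.
rewrite (@esum_single _ _ A); first exact: supabs_le.
- by right; left.
- by move=> *; exact: supabs_ge0.
move=> B PB BA; apply: le_anti; rewrite supabs_ge0 andbT.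
apply: supabs_le => // k; move: PB BA => [->|[->|[j [j0 Aj] ->]]] //.
by move=> _; rewrite /single => /eqP ->; rewrite xA // normr0.
Qed.

Lemma qnorm_unit (F : set cantor_space) n :
  F empty_set_pt -> (forall k, (0 < k)%N -> F (single k)) -> (0 < n)%N ->
  qnorm F (@unitv R n) = 1%E.
Proof.
move=> H0 H1 n0; apply: le_anti; apply/andP; split.
  apply: (@qnorm_supp _ (single n)) => //.
  - exact: H1.
  - by rewrite /subset_omega /single; case: n n0.
  - by move=> k; rewrite /single /unitv => /negbTE ->.
  - by move=> k; rewrite /unitv; case: ifP; rewrite ?normr1 ?normr0.
apply: le_ereal_inf_tmp => _ [P [[Pe Pom Pcov Pdis] PF] <-].
have [A0 PA0 A0n] := Pcov n n0.
rewrite (@esum_single _ _ A0) //.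
- have := @supabs_ge (@unitv R n) A0 n A0n; by rewrite /unitv eqxx normr1.
- by move=> *; exact: supabs_ge0.
move=> B PB BA; apply: le_anti; rewrite supabs_ge0 andbT.
apply: supabs_le => // k Bk; rewrite /unitv; case: eqP => [e|]; last by rewrite normr0.
subst; have := Pdis _ _ PB PA0 BA n; by rewrite Bk A0n.
Qed.


Lemma c00_lin (a : R) (x y : nat -> R) : c00 x -> c00 y -> c00 (a *: x + y).
Proof.
move=> [x0 fx] [y0 fy]; split.
  by have -> : (a *: x + y) 0%N = a * x 0%N + y 0%N by []; rewrite x0 y0 mulr0 addr0.
have fU : finite_set ([set k | x k != 0] `|` [set k | y k != 0]).
  by rewrite finite_setU.
apply: sub_finite_set fU => k /=.
have -> : (a *: x + y) k = a * x k + y k by [].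
case: (eqVneq (x k) 0) => [->|]; last by left.
case: (eqVneq (y k) 0) => [->|]; last by right.
by rewrite mulr0 addr0 eqxx.
Qed.

Lemma c00_0 : c00 (0 : nat -> R).
Proof.
split => //; apply: (@sub_finite_set _ _ set0) => // k /=.
by rewrite eqxx.
Qed.

Lemma c00_unit k : (0 < k)%N -> c00 (@unitv R k).
Proof.
move=> k0; split; first by rewrite /unitv; case: k k0.
apply: (@sub_finite_set _ _ [set k]) => // j /=; rewrite /unitv.
by case: (eqVneq j k) => // _; rewrite eqxx.
Qed.

Definition vec (S : seq nat) (a : nat -> R) : nat -> R :=
  \sum_(k <- S) a k *: @unitv R k.

Lemma c00_vec S a : all (fun k => 0 < k)%N S -> c00 (vec S a).
Proof.
rewrite /vec; elim: S => [|k S IH] /=; first by rewrite big_nil => _; exact: c00_0.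
move=> /andP[k0 H]; rewrite big_cons; apply: c00_lin; [exact: c00_unit|exact: IH].
Qed.

Lemma f0 F (f : (nat -> R) -> R) : cont_lin_functional F f -> f 0 = 0.
Proof.
move=> [lin _]; have := lin 1 0 0 c00_0 c00_0.
rewrite scale1r addr0 mul1r => e; have : f 0 + f 0 - f 0 = 0 by rewrite -e subrr.
by rewrite addrK.
Qed.

Lemma f_vec F (f : (nat -> R) -> R) S a : cont_lin_functional F f -> all (fun k => 0 < k)%N S ->
  f (vec S a) = \sum_(k <- S) a k * f (@unitv R k).
Proof.
move=> cf; have [lin _] := cf; elim: S => [|k S IH] /=.
  by move=> _; rewrite /vec !big_nil; exact: f0 cf.
move=> /andP[k0 H]; rewrite /vec !big_cons lin; first by rewrite -IH.
- exact: c00_unit.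
- exact: c00_vec.
Qed.

Lemma vec_eval S a j : uniq S -> vec S a j = if j \in S then a j else 0.
Proof.
have sc : forall b (g : nat -> R) i, (b *: g) i = b * g i by [].
move=> uS; rewrite /vec fct_sumE /=; case: ifP => jS.
  rewrite (bigD1_seq j) //= sc /unitv eqxx mulr1 big1 ?addr0 // => k kj.
  by rewrite sc ifN ?mulr0 // eq_sym.
rewrite big1_seq // => k /andP[_ kS] /=; rewrite sc /unitv ifN ?mulr0 //.
by apply: contraFN jS => /eqP ->.
Qed.


Definition large' (F : set cantor_space) :=
  forall M : set nat, ~ M 0%N -> infinite_set M -> forall N, (0 < N)%N ->
    exists A : cantor_space, exists S : {fset nat},
      [/\ F A, (forall k, A k = (k \in S)), [set` S] `<=` M & (#|` S|)%fset = N].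

Lemma wnull F : F empty_set_pt -> (forall k, (0 < k)%N -> F (single k)) ->
  large' F -> weakly_null F (fun n => @unitv R n.+1).
Proof.
move=> H0 H1 Hl f cf.
apply/cvgrPdist_lt => e e0.
pose M := [set k | (0 < k)%N /\ e <= `|f (@unitv R k)|].
have finM : finite_set M.
  apply: contrapT => infM.
  have [d d0 Hd] := cf.2 0 c00_0 1 ltr01.
  pose c := d / 2.
  have c0 : 0 < c by rewrite divr_gt0.
  pose N := (Num.trunc ((c * e)^-1)).+1.
  have [A [S [FA HA SM cS]]] := Hl M (fun h => match h with conj h1 _ => ltac:(by rewrite ltnn in h1) end) infM N erefl.
  pose a := fun k => c * (if 0 <= f (@unitv R k) then 1 else -1).
  pose y := vec S a.
  have Spos : all (fun k => 0 < k)%N S by apply/allP => k kS; have [] := SM k kS.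
  have uS : uniq S := fset_uniq S.
  have qy : (qnorm F y <= c%:E)%E.
    apply: (@qnorm_supp _ A) => //.
    - by rewrite /subset_omega HA; apply/negP => /SM [].
    - exact: ltW.
    - by move=> k; rewrite HA => kS; rewrite /y vec_eval // (negbTE kS).
    - move=> k; rewrite /y vec_eval //; case: ifP => _; last by rewrite normr0 ltW.
      by rewrite /a normrM; case: ifP; rewrite ?normrN normr1 mulr1 gtr0_norm.
  have := Hd y (@c00_vec _ a Spos).
  rewrite subr0 (@f0 _ _ cf) subr0.
  have -> : (qnorm F y < d%:E)%E.
    apply: le_lt_trans qy _; rewrite lte_fin /c ltr_pdivrMr // ltr_pMr //.
    by rewrite ltr1n.
  move=> /(_ isT); apply/negP; rewrite -leNgt.
  rewrite /y (@f_vec _ _ _ _ cf Spos).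
  have le1 : 1 <= N%:R * (c * e).
    rewrite -ler_pdivrMr ?mulr_gt0 // div1r; apply: ltW; exact: truncnS_gt.
  apply: le_trans le1 _.
  rewrite -cS card_fset_sum1 natr_sum mulr_suml.
  apply: le_trans (ler_norm _).
  rewrite big_seq_cond [X in _ <= X]big_seq_cond; apply: ler_sum => k /andP[kS _].
  have [_ Mk] := SM k kS.
  rewrite mul1r /a -mulrA ler_pM2l //.
  case: ifP => fk; first by rewrite mul1r -(ger0_norm fk).
  have fk' : f (unitv R k) < 0 by rewrite ltNge fk.
  by rewrite mulN1r -(ltr0_norm fk').
pose b := (\max_(k <- fset_set M) k)%N.
exists b.+1 => // n /= bn.
rewrite sub0r normrN ltNge; apply/negP => H.
have Mn : M n.+1 by split.
have : (n.+1 <= b)%N.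
  by apply: leq_bigmax_seq => //; rewrite in_fset_set // inE.
by rewrite ltnNge (ltnW bn).
Qed.


Lemma general F : F empty_set_pt -> (forall k, (0 < k)%N -> F (single k)) ->
  large' F ->
  [/\ weakly_null F (fun n => @unitv R n.+1),
      (forall n, (0 < n)%N -> qnorm F (@unitv R n) = 1%E) &
      not_schur R F].
Proof.
move=> H0 H1 Hl.
have wn := @wnull F H0 H1 Hl.
have qn : forall n, (0 < n)%N -> qnorm F (@unitv R n) = 1%E.
  by move=> n n0; exact: qnorm_unit.
split => //; exists (fun n => @unitv R n.+1); first by move=> n; exact: c00_unit.
split => // /(_ 1 ltr01) [N _ HN].
by have := HN N (leqnn N); rewrite /= qn // ltxx.
Qed.

Lemma large_large' F : large F -> large' F.
Proof.
move=> HL M M0 infM N N0.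
have [A FA [AM AN]] := HL M M0 infM N N0.
have finA : finite_set [set k | A k] by apply/finite_setP; exists N.
exists A, (fset_set [set k | A k]); split => //.
- by move=> k; rewrite in_fset_set //; apply/idP/idP; rewrite in_setE.
- by move=> k /=; rewrite in_fset_set // inE => /AM.
- exact: card_fset_set.
Qed.


End S.

Section T.
Local Open Scope fset_scope.

Lemma trim (S : {fset nat}) N : (N <= #|` S|)%N ->
  exists2 S' : {fset nat}, S' `<=` S & #|` S'| = N.
Proof.
move=> NS; exists [fset x in take N S].
  by apply/fsubsetP => x; rewrite inE => /mem_take.
rewrite card_fseq undup_id ?take_uniq ?fset_uniq // size_takel //.
Qed.

Lemma schreier_single k : (0 < k)%N -> schreier (single k).
Proof.
move=> k0; right; exists k; split.
- by rewrite /single eqxx.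
- by move=> j /eqP ->.
have -> : [set j | single k j] = [set k].
  by apply/seteqP; split => j /=; rewrite /single; [move=> /eqP|move=> ->].
by rewrite (card_le_eql card_set1) card_le_II.
Qed.

Lemma schreier_large : large' schreier.
Proof.
move=> M M0 infM N N0.
have infM' : infinite_set (M `\` `I_N) by apply: infinite_setD => //; exact: finite_II.
have [B BM NB] := infinite_set_fset N infM'.
have [S SB cS] := @trim _ _ NB.
have SM' : forall k, k \in S -> (M `\` `I_N)%classic k.
  by move=> k kS; apply: BM => /=; apply: (fsubsetP SB).
have [x xS] : exists x, x \in S.
  by apply/fset0Pn; rewrite -cardfs_gt0 cS.
have exS : exists m, m \in S by exists x.
case: (ex_minnP exS) => m mS mmin.
exists (fun k => k \in S), S; split => //.
- right; exists m; split => //.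
  have -> : [set k | k \in S] = [set` S] by [].
  have SN : ([set` S] #= `I_N)%card by apply/card_eq_fsetP.
  rewrite (card_le_eql SN) card_le_II.
  by have [_ /negP] := SM' m mS; rewrite /= -leqNgt.
- by move=> k /SM' [].
Qed.

End T.

Theorem mainTheorem14 (R : realType) :
  (forall F : set cantor_space,
     finite_family F -> compact_family F -> hereditary F ->
     covers_omega F -> large F ->
     [/\ weakly_null F (fun n => @unitv R n.+1),
         (forall n, (0 < n)%N -> qnorm F (@unitv R n) = 1%E) &
         not_schur R F]) /\
  not_schur R schreier.
Proof.
split.
  move=> F _ _ Hh [Hc _] HL.
  apply: general; last exact: large_large'.
  - have [A FA _] := Hc 1%N isT.
    by apply: Hh FA _.
  - move=> k k0; have [A FA Ak] := Hc k k0.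
    by apply: Hh FA _ => j /eqP ->.
have [_ _ ?] := @general R schreier (or_introl erefl) schreier_single schreier_large.
done.
Qed.
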